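(* Let $f(x)=-\ln\Big(\sum_{i=1}^nw_ie^{-\|x-\mu_i\|^2/2}\Big)$ on $\mathbb{R}^d$, where $w_i>0$, $\sum_iw_i=1$, and $\|\mu_i\|\le D$ for all $i$. Then there exists a $\frac12$-strongly convex function $g:\mathbb{R}^d\to\mathbb{R}$ with $\sup_x|f(x)-g(x)|\le D^2$.
   Context: A function $h:\mathbb{R}^d\to\mathbb{R}$ is $\alpha$-strongly convex if for all $x,y$ and $t\in[0,1]$, $h(tx+(1-t)y)\le th(x)+(1-t)h(y)-\frac12\alpha t(1-t)\|x-y\|_2^2$. *)

(* Defs.v *)
From Stdlib Require Import Reals.
Open Scope R_scope.

(* Vectors of R^d are represented as functions nat -> R that vanish at
   indices >= d (coordinates 0..d-1). *)
Definition in_Rd (d : nat) (x : nat -> R) : Prop := forall j, (d <= j)%nat -> x j = 0.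

Fixpoint sumR (n : nat) (f : nat -> R) : R :=
  match n with
  | O => 0
  | S m => sumR m f + f m
  end.

Definition sqnorm (d : nat) (x : nat -> R) : R := sumR d (fun j => (x j) ^ 2).
Definition norm (d : nat) (x : nat -> R) : R := sqrt (sqnorm d x).

Definition vsub (x y : nat -> R) : nat -> R := fun j => x j - y j.
Definition vcomb (t : R) (x y : nat -> R) : nat -> R := fun j => t * x j + (1 - t) * y j.

Definition strongly_convex (d : nat) (alpha : R) (h : (nat -> R) -> R) : Prop :=
  forall x y t, in_Rd d x -> in_Rd d y -> 0 <= t <= 1 ->
    h (vcomb t x y) <= t * h x + (1 - t) * h y
                        - / 2 * alpha * t * (1 - t) * (norm d (vsub x y)) ^ 2.

Definition mixture_potential (d n : nat) (w : nat -> R) (mu : nat -> nat -> R)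
  (x : nat -> R) : R :=
  - ln (sumR n (fun i => w i * exp (- (norm d (vsub x (mu i))) ^ 2 / 2))).

(* Main.v *)
Require Import Defs.
From Stdlib Require Import Reals Lra Lia.
Open Scope R_scope.

Lemma my_ln_le x y : 0 < x -> x <= y -> ln x <= ln y.
Proof. intros Hx [H|H]. left; apply ln_increasing; auto. subst; lra. Qed.

Lemma my_exp_le x y : x <= y -> exp x <= exp y.
Proof. intros [H|H]. left; apply exp_increasing; auto. subst; lra. Qed.

Lemma sumR_ext n f g : (forall i, (i < n)%nat -> f i = g i) -> sumR n f = sumR n g.
Proof. induction n; simpl; intros H; auto. rewrite IHn; [rewrite H|]; auto. Qed.

Lemma sumR_le n f g : (forall i, (i < n)%nat -> f i <= g i) -> sumR n f <= sumR n g.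
Proof. induction n; simpl; intros H; [lra|]. assert (sumR n f <= sumR n g) by (apply IHn; auto).
  assert (f n <= g n) by (apply H; lia). lra. Qed.

Lemma sumR_nonneg n f : (forall i, (i < n)%nat -> 0 <= f i) -> 0 <= sumR n f.
Proof. intros H. apply Rle_trans with (sumR n (fun _ => 0)).
  induction n; simpl; [lra|]. assert (0 <= sumR n (fun _ => 0)) by (apply IHn; auto). lra.
  apply sumR_le; auto. Qed.

Lemma sumR_pos n f : (0 < n)%nat -> (forall i, (i < n)%nat -> 0 < f i) -> 0 < sumR n f.
Proof. destruct n; [lia|]. intros _ H; simpl.
  assert (0 <= sumR n f) by (apply sumR_nonneg; intros; left; apply H; lia).
  assert (0 < f n) by (apply H; lia). lra. Qed.

Lemma sumR_scal n k f : sumR n (fun i => k * f i) = k * sumR n f.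
Proof. induction n; simpl; [ring|]. rewrite IHn; ring. Qed.

Lemma sumR_lin3 n a b c f g h :
  sumR n (fun i => a * f i + b * g i + c * h i) = a * sumR n f + b * sumR n g + c * sumR n h.
Proof. induction n; simpl; [ring|]. rewrite IHn; ring. Qed.

Lemma sqnorm_nonneg d v : 0 <= sqnorm d v.
Proof. unfold sqnorm. apply sumR_nonneg. intros; apply pow2_ge_0. Qed.

Lemma norm_sq d v : norm d v ^ 2 = sqnorm d v.
Proof. unfold norm. apply pow2_sqrt, sqnorm_nonneg. Qed.

Lemma sq_comb d t x y c :
  sqnorm d (vsub (vcomb t x y) c) =
  t * sqnorm d (vsub x c) + (1 - t) * sqnorm d (vsub y c) + (- (t * (1 - t))) * sqnorm d (vsub x y).
Proof. unfold sqnorm. rewrite <- sumR_lin3. apply sumR_ext; intros; unfold vsub, vcomb; ring. Qed.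

Lemma sq_lower d y m c :
  sqnorm d (vsub y c) / 4 - sqnorm d (vsub m c) / 2 <= sqnorm d (vsub y m) / 2.
Proof.
  assert (0 <= sumR d (fun j => / 2 * (vsub y m j)^2 + (- / 4) * (vsub y c j)^2 + / 2 * (vsub m c j)^2)).
  { apply sumR_nonneg; intros; unfold vsub.
    replace (/ 2 * (y i - m i) ^ 2 + - / 4 * (y i - c i) ^ 2 + / 2 * (m i - c i) ^ 2)
      with (/4 * (y i - 2 * m i + c i)^2) by field. assert (0 <= (y i - 2 * m i + c i)^2) by apply pow2_ge_0. lra. }
  rewrite sumR_lin3 in H. unfold sqnorm. lra.
Qed.

Lemma sq_refl d x m :
  / 2 * sqnorm d (vsub m (fun j => - x j)) + (- / 4) * sqnorm d (vsub x (fun j => - x j))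
  + / 2 * sqnorm d (vsub x m) = sqnorm d m.
Proof. unfold sqnorm. rewrite <- sumR_lin3. apply sumR_ext; intros; unfold vsub; field. Qed.

Theorem mainTheorem10 (d n : nat) (w : nat -> R) (mu : nat -> nat -> R) (D : R)
  (Hw_pos : forall i, (i < n)%nat -> 0 < w i)
  (Hw_sum : sumR n w = 1)
  (Hmu_dim : forall i, (i < n)%nat -> in_Rd d (mu i))
  (Hmu_bd : forall i, (i < n)%nat -> norm d (mu i) <= D) :
  exists g : (nat -> R) -> R,
    strongly_convex d (/ 2) g /\
    (forall x, in_Rd d x -> Rabs (mixture_potential d n w mu x - g x) <= D ^ 2).
Proof.
  assert (Hn : (0 < n)%nat) by (destruct n; [simpl in Hw_sum; lra | lia]).
  set (Q := fun c => sumR n (fun i => w i * exp (sqnorm d (vsub (mu i) c) / 2))).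
  assert (HQ : forall c, 0 < Q c).
  { intros c; apply sumR_pos; auto; intros; apply Rmult_lt_0_compat; auto; apply exp_pos. }
  set (phi := fun c x => sqnorm d (vsub x c) / 4 - ln (Q c)).
  set (f := mixture_potential d n w mu).
  set (P := fun x => sumR n (fun i => w i * exp (- sqnorm d (vsub x (mu i)) / 2))).
  assert (HP : forall x, 0 < P x).
  { intros x; apply sumR_pos; auto; intros; apply Rmult_lt_0_compat; auto; apply exp_pos. }
  assert (Hf : forall x, f x = - ln (P x)).
  { intros x; unfold f, mixture_potential, P. f_equal. f_equal. apply sumR_ext; intros.
    rewrite norm_sq; auto. }
  assert (Hup : forall c x, phi c x <= f x).
  { intros c x. rewrite Hf. unfold phi.
    assert (ln (P x) <= ln (Q c * exp (- (sqnorm d (vsub x c) / 4)))).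
    { apply my_ln_le; auto. unfold Q. rewrite Rmult_comm, <- sumR_scal. apply sumR_le; intros.
      replace (exp (- (sqnorm d (vsub x c) / 4)) * (w i * exp (sqnorm d (vsub (mu i) c) / 2)))
        with (w i * exp (sqnorm d (vsub (mu i) c) / 2 + - (sqnorm d (vsub x c) / 4))) by (rewrite exp_plus; ring).
      apply Rmult_le_compat_l; [left; auto|]. apply my_exp_le.
      pose proof (sq_lower d x (mu i) c). lra. }
    rewrite ln_mult, ln_exp in H; auto; [lra | apply exp_pos]. }
  assert (Hlow : forall x, f x - D ^ 2 <= phi (fun j => - x j) x).
  { intros x. rewrite Hf. unfold phi. set (c := fun j => - x j).
    assert (ln (Q c * exp (- (sqnorm d (vsub x c) / 4))) <= ln (P x * exp (D ^ 2))).
    { apply my_ln_le. apply Rmult_lt_0_compat; auto; apply exp_pos.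
      unfold Q, P. rewrite (Rmult_comm _ (exp (D^2))), Rmult_comm, <- !sumR_scal. apply sumR_le; intros.
      replace (exp (- (sqnorm d (vsub x c) / 4)) * (w i * exp (sqnorm d (vsub (mu i) c) / 2)))
        with (w i * exp (sqnorm d (vsub (mu i) c) / 2 + - (sqnorm d (vsub x c) / 4))) by (rewrite exp_plus; ring).
      replace (exp (D ^ 2) * (w i * exp (- sqnorm d (vsub x (mu i)) / 2)))
        with (w i * exp (- sqnorm d (vsub x (mu i)) / 2 + D ^ 2)) by (rewrite exp_plus; ring).
      apply Rmult_le_compat_l; [left; auto|]. apply my_exp_le.
      pose proof (sq_refl d x (mu i)).
      assert (sqnorm d (mu i) <= D ^ 2).
      { rewrite <- norm_sq. pose proof (Hmu_bd i H). pose proof (sqrt_pos (sqnorm d (mu i))).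
        unfold norm in *. nra. }
      unfold c. lra. }
    rewrite !ln_mult, !ln_exp in H; auto; try apply exp_pos. lra. }
  assert (Hb : forall x, bound (fun r => exists c, r = phi c x)).
  { intros x. exists (f x). intros r [c ->]. auto. }
  assert (He : forall x, exists r, (fun r => exists c, r = phi c x) r).
  { intros x. exists (phi (fun j => 0) x). exists (fun j => 0). auto. }
  set (G := fun x => proj1_sig (completeness _ (Hb x) (He x))).
  assert (HG1 : forall x c, phi c x <= G x).
  { intros x c. unfold G. destruct (completeness _ (Hb x) (He x)) as [gx [H1 H2]]. cbn. apply H1. eauto. }
  assert (HG2 : forall x r, (forall c, phi c x <= r) -> G x <= r).
  { intros x r Hr. unfold G. destruct (completeness _ (Hb x) (He x)) as [gx [H1 H2]]. cbn. apply H2.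
    intros s [c ->]. auto. }
  clearbody G.
  exists G. split.
  - intros x y t _ _ Ht. apply HG2. intros c.
    assert (phi c x <= G x) by auto.
    assert (phi c y <= G y) by auto.
    unfold phi in *. rewrite sq_comb, norm_sq.
    assert (t * (sqnorm d (vsub x c) / 4 - ln (Q c)) <= t * G x) by (apply Rmult_le_compat_l; lra).
    assert ((1 - t) * (sqnorm d (vsub y c) / 4 - ln (Q c)) <= (1 - t) * G y) by (apply Rmult_le_compat_l; lra).
    match goal with |- ?L <= ?Rr => replace L with (t * (sqnorm d (vsub x c) / 4 - ln (Q c)) + (1 - t) * (sqnorm d (vsub y c) / 4 - ln (Q c)) - / 2 * / 2 * t * (1 - t) * sqnorm d (vsub x y)) by field end.
    lra.
  - intros x _.
    assert (G x <= f x) by (apply HG2; auto).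
    pose proof (HG1 x (fun j => - x j)).
    pose proof (Hlow x). fold f. rewrite Rabs_right; lra.
Qed.
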